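(* There is an absolute constant $c>0$ such that the following holds. Let $\mathcal G$ be any linear congestion game with $n\ge 3$ players, let $\beta\ge1$ and $T\ge n$, and consider any best response dynamics starting from an arbitrary initial state and satisfying the $(T,\beta)$-Fairness Condition. Then the state $S$ reached after the first $\lceil\log\log n\rceil$ of its $\beta$-bounded $T$-coverings (hence after at most $T\lceil\log\log n\rceil$ best responses) satisfies $C(S)\le c\,\beta\,\mathrm{OPT}$, i.e. $C(S)/\mathrm{OPT}=O(\beta)$.
   Context: A linear congestion game has players $N=\{1,\dots,n\}$, a finite resource set $E$, strategy sets $\Sigma_i\subseteq 2^E$, and delay functions $f_e(x)=a_ex+b_e$ with $a_e,b_e\ge 0$. For a profile $S=(s_1,\dots,s_n)$, $n_e(S)=|\{i:e\in s_i\}|$, the cost of player $i$ is $c_i(S)=\sum_{e\in s_i}f_e(n_e(S))$, the social cost is $C(S)=\sum_i c_i(S)$, and $\mathrm{OPT}=\min_S C(S)$ (assumed positive). A best response of player $i$ in $S$ is a strategy $s_i^b\in\Sigma_i$ minimizing $c_i(S_{-i},\cdot)$ (where $(S_{-i},s_i')$ replaces $s_i$ by $s_i'$); if no strategy strictly decreases $i$'s cost, the best response is $s_i$ itself. A best response dynamics is a sequence of states each obtained from the previous one by a best response of some player. A $T$-covering is a segment of $T$ consecutive best responses of the dynamics in which every player moves at least once; it is $\beta$-bounded if moreover every player moves at most $\beta$ times in it. A dynamics satisfies the $(T,\beta)$-Fairness Condition if it can be decomposed into a sequence of consecutive $\beta$-bounded $T$-coverings. Logarithms are base 2. *)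

(* Defs.v *)
From HB Require Import structures.
From mathcomp Require Import all_boot all_order all_algebra.
Set Implicit Arguments. Unset Strict Implicit. Unset Printing Implicit Defensive.
Import Order.TTheory GRing.Theory Num.Theory.
Local Open Scope ring_scope.

Definition profile (n : nat) (E : finType) := {ffun 'I_n -> {set E}}.

Definition load n (E : finType) (S : profile n E) (e : E) : nat :=
  #|[set i : 'I_n | e \in S i]|.

Definition pcost (R : realFieldType) n (E : finType) (a b : E -> R)
  (S : profile n E) (i : 'I_n) : R :=
  \sum_(e in S i) (a e * (load S e)%:R + b e).

Definition scost (R : realFieldType) n (E : finType) (a b : E -> R)
  (S : profile n E) : R :=
  \sum_(i < n) pcost a b S i.

Definition feasible n (E : finType) (Sigma : 'I_n -> {set {set E}})
  (S : profile n E) : Prop :=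
  forall i, S i \in Sigma i.

Definition upd n (E : finType) (S : profile n E) (i : 'I_n) (s : {set E})
  : profile n E := [ffun j => if j == i then s else S j].

Definition best_response (R : realFieldType) n (E : finType) (a b : E -> R)
  (Sigma : 'I_n -> {set {set E}}) (S : profile n E) (i : 'I_n)
  (s : {set E}) : Prop :=
  [/\ s \in Sigma i,
      (forall s', s' \in Sigma i ->
          pcost a b (upd S i s) i <= pcost a b (upd S i s') i) &
      ((forall s', s' \in Sigma i ->
          pcost a b S i <= pcost a b (upd S i s') i) -> s = S i)].

(* Number of moves of player i in the j-th length-T segment
   (steps j*T, ..., j*T + T - 1); p t is the player moving at step t. *)
Definition moves n (p : nat -> 'I_n) (T j : nat) (i : 'I_n) : nat :=
  (\sum_(j * T <= t < j * T + T) (p t == i))%N.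

Definition bounded_covering (R : realFieldType) n (p : nat -> 'I_n)
  (beta : R) (T j : nat) : Prop :=
  forall i : 'I_n, (0 < moves p T j i)%N /\ (moves p T j i)%:R <= beta.

(* ceil(log2(log2 n)) for n >= 2: the least k with log2 n <= 2^k,
   i.e. with ceil(log2 n) <= 2^k. *)
Definition loglog (n : nat) : nat := up_log 2 (up_log 2 n).

(* Main.v *)
Require Import Defs.
From HB Require Import structures.
From mathcomp Require Import all_boot all_order all_algebra.
From mathcomp Require Import zify ring lra.
Import Order.TTheory GRing.Theory Num.Theory.
Set Implicit Arguments. Unset Strict Implicit. Unset Printing Implicit Defensive.
Local Open Scope ring_scope.

Lemma load_sum n (E : finType) (S : profile n E) e :
  load S e = (\sum_(i < n) (e \in S i))%N.
Proof.
rewrite /load -sum1_card big_mkcond /=; apply: eq_bigr => i _.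
by rewrite inE; case: (e \in S i).
Qed.

Lemma load_le_n n (E : finType) (S : profile n E) e : (load S e <= n)%N.
Proof. by rewrite /load; apply: leq_trans (max_card _) _; rewrite card_ord. Qed.

Lemma swap_sum (R : realFieldType) n (E : finType) (S : profile n E)
  (F : 'I_n -> E -> R) :
  \sum_(i < n) \sum_(e in S i) F i e = \sum_e \sum_(i < n | e \in S i) F i e.
Proof.
under eq_bigr => i _ do rewrite big_mkcond.
rewrite exchange_big /=; apply: eq_bigr => e _.
by rewrite [RHS]big_mkcond.
Qed.

Lemma sum_players (R : realFieldType) n (E : finType) (S : profile n E)
  (F : E -> R) :
  \sum_(i < n) \sum_(e in S i) F e = \sum_e (load S e)%:R * F e.
Proof.
rewrite swap_sum; apply: eq_bigr => e _.
rewrite load_sum natr_sum mulr_suml [LHS]big_mkcond /=; apply: eq_bigr => i _.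
by case: (e \in S i); rewrite ?mul1r ?mul0r.
Qed.

Lemma scost_load (R : realFieldType) n (E : finType) (a b : E -> R)
  (S : profile n E) :
  scost a b S = \sum_e (load S e)%:R * (a e * (load S e)%:R + b e).
Proof. by rewrite /scost /pcost sum_players. Qed.

Lemma upd_same n (E : finType) (S : profile n E) i s : upd S i s i = s.
Proof. by rewrite /upd ffunE eqxx. Qed.

Lemma upd_other n (E : finType) (S : profile n E) i j s :
  j != i -> upd S i s j = S j.
Proof. by move=> /negbTE h; rewrite /upd ffunE h. Qed.

Lemma load_upd n (E : finType) (S : profile n E) i s e :
  (load (upd S i s) e <= load S e + (e \in s))%N.
Proof.
rewrite !load_sum (bigD1 i) //= [X in (_ <= X + _)%N](bigD1 i) //= upd_same.
under eq_bigr => j hj do rewrite upd_other //.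
lia.
Qed.

Lemma br_bound (R : realFieldType) n (E : finType) (a b : E -> R)
  (Sigma : 'I_n -> {set {set E}}) (S : profile n E) i s (O : profile n E) :
  (forall e, 0 <= a e) ->
  best_response a b Sigma S i s -> O i \in Sigma i ->
  pcost a b (upd S i s) i <=
  \sum_(e in O i) (a e * (load S e + 1)%:R + b e).
Proof.
move=> ha [_ Hmin _] HO.
apply: le_trans (Hmin _ HO) _.
rewrite /pcost upd_same; apply: ler_sum => e _.
rewrite lerD2r ler_wpM2l // ler_nat.
have := load_upd S i (O i) e.
case: (e \in O i) => /=; lia.
Qed.

Lemma sum_moves (R : realFieldType) n (p : nat -> 'I_n) (beta : R) t0 T
  (g : 'I_n -> R) :
  (forall i, 0 <= g i) ->
  (forall i, ((\sum_(t0 <= t < t0 + T) (p t == i))%N)%:R <= beta) ->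
  \sum_(t0 <= t < t0 + T) g (p t) <= beta * \sum_(i < n) g i.
Proof.
move=> hg hb.
rewrite (eq_bigr (fun t => \sum_(i < n) ((p t == i)%:R * g i))); last first.
  move=> t _; rewrite (bigD1 (p t)) //= eqxx mul1r big1 ?addr0 // => i hi.
  by rewrite eq_sym (negbTE hi) mul0r.
rewrite exchange_big /= mulr_sumr; apply: ler_sum => i _.
rewrite -mulr_suml -natr_sum; exact: ler_wpM2r.
Qed.


Lemma pair_count n (x : 'I_n -> bool) (t : 'I_n -> nat) :
  (\sum_(i < n | x i) \sum_(l < n) x l <=
   2 * \sum_(i < n | x i) \sum_(l < n) ((t l <= t i) && x l))%N.
Proof.
have H1 : (\sum_(i < n | x i) \sum_(l < n) x l =
           \sum_(i < n) \sum_(l < n) (x i && x l))%N.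
  rewrite big_mkcond /=; apply: eq_bigr => i _.
  by case: (x i) => //=; rewrite big1.
have H2 : (\sum_(i < n | x i) \sum_(l < n) ((t l <= t i) && x l) =
           \sum_(i < n) \sum_(l < n) ((x i && x l) && (t l <= t i)))%N.
  rewrite big_mkcond /=; apply: eq_bigr => i _.
  case: (x i) => /=; last by rewrite big1.
  by apply: eq_bigr => l _; rewrite andbC.
have H3 : (\sum_(i < n) \sum_(l < n) ((x i && x l) && (t l <= t i)) =
           \sum_(i < n) \sum_(l < n) ((x i && x l) && (t i <= t l)))%N.
  rewrite exchange_big /=; apply: eq_bigr => i _; apply: eq_bigr => l _.
  by rewrite (andbC (x l)).
rewrite H1 H2 mul2n -addnn {2}H3 -big_split /=; apply: leq_sum => i _.
rewrite -big_split /=; apply: leq_sum => l _.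
case: (x i && x l) => //=.
by have := ssrnat.leq_total (t l) (t i); case: (t l <= t i)%N; case: (t i <= t l)%N.
Qed.

Lemma ex_of_sum_pos (P : pred nat) m k :
  (0 < \sum_(m <= t < k) P t)%N -> exists t, (m <= t < k)%N /\ P t.
Proof.
elim: k => [|k IH]; first by rewrite big_geq.
case: (leqP m k) => hmk; last by rewrite big_geq.
rewrite big_nat_recr //=.
case hP: (P k).
  by move=> _; exists k; rewrite hmk ltnSn.
rewrite addn0 => /IH [t [/andP [h1 h2] h3]]; exists t; split => //.
by rewrite h1 ltnW.
Qed.


Definition seg_ok (R : realFieldType) n (E : finType) (a b : E -> R)
  (Sigma : 'I_n -> {set {set E}}) (beta : R) (S : nat -> profile n E)
  (p : nat -> 'I_n) (t0 T : nat) : Prop :=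
  (forall t, (t0 <= t < t0 + T)%N -> exists s,
      best_response a b Sigma (S t) (p t) s /\ S t.+1 = upd (S t) (p t) s) /\
  (forall i, (0 < \sum_(t0 <= t < t0 + T) (p t == i))%N /\
             ((\sum_(t0 <= t < t0 + T) (p t == i))%N)%:R <= beta).

Definition Qt (R : realFieldType) n (E : finType) (a b : E -> R)
  (O : profile n E) (N : E -> nat) : R :=
  \sum_(i < n) \sum_(e in O i) (a e * (N e + 1)%:R + b e).

Lemma persist (R : realFieldType) n (E : finType) (a b : E -> R)
  (Sigma : 'I_n -> {set {set E}}) (beta : R) (S : nat -> profile n E)
  (p : nat -> 'I_n) (t0 T : nat) i m d :
  seg_ok a b Sigma beta S p t0 T ->
  (t0 <= m)%N -> (m + d <= t0 + T)%N ->
  (forall u, (m <= u < m + d)%N -> p u != i) -> S (m + d)%N i = S m i.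
Proof.
move=> [Hst _] h1; elim: d => [|d IH] h2 hp; first by rewrite addn0.
have [s' [_ E1]] := Hst (m + d)%N ltac:(apply/andP; split; lia).
rewrite addnS E1 upd_other; last by rewrite eq_sym; apply: hp; apply/andP; split; lia.
apply: IH; first lia.
by move=> u /andP [hu1 hu2]; apply: hp; apply/andP; split; lia.
Qed.

Lemma seg_final (R : realFieldType) n (E : finType) (a b : E -> R)
  (Sigma : 'I_n -> {set {set E}}) (beta : R) (S : nat -> profile n E)
  (p : nat -> 'I_n) (t0 T : nat) (O : profile n E) (N : E -> nat) :
  (forall e, 0 <= a e) -> (forall e, 0 <= b e) -> feasible Sigma O ->
  seg_ok a b Sigma beta S p t0 T ->
  (forall u e, (t0 <= u < t0 + T)%N -> (load (S u) e <= N e)%N) ->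
  scost a b (S (t0 + T)%N) <= 2 * Qt a b O N.
Proof.
move=> ha hb HO Hseg hN.
have Hseg' := Hseg; case: Hseg' => [Hst Hcov].
have Hlast : forall i, exists ti, [/\ (t0 <= ti < t0 + T)%N, p ti = i &
    forall u, (ti < u < t0 + T)%N -> p u != i].
  move=> i.
  have [t [ht hpt]] := ex_of_sum_pos (proj1 (Hcov i)).
  pose P := fun u => (t0 <= u < t0 + T)%N && (p u == i).
  have exP : exists u, P u by exists t; rewrite /P ht hpt.
  have ubP : forall u, P u -> (u <= t0 + T)%N.
    by move=> u /andP [/andP [_ h] _]; exact: ltnW.
  case: (ex_maxnP exP ubP) => ti /andP [hti /eqP hpti] hmax.
  exists ti; split => // u /andP [h1 h2]; apply/negP => /eqP hpu.
  move/andP: hti => [hti1 hti2].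
  have : (u <= ti)%N.
    by apply: hmax; rewrite /P hpu eqxx andbT; apply/andP; split; lia.
  lia.
have [tf Htf] := fin_all_exists Hlast.
set f := S (t0 + T)%N.
have mid : forall i u, ((tf i) < u <= t0 + T)%N -> S u i = S (tf i).+1 i.
  move=> i u /andP [h1 h2]; have [/andP [ha1 ha2] _ hnp] := Htf i.
  have := @persist _ _ _ _ _ _ _ _ _ _ _ i (tf i).+1 (u - (tf i).+1) Hseg.
  rewrite subnKC //; apply; try lia.
  by move=> v /andP [hv1 hv2]; apply: hnp; apply/andP; split; lia.
have fin : forall i, f i = S (tf i).+1 i.
  by move=> i; apply: mid; have [/andP [? ?] _ _] := Htf i; apply/andP; split; lia.
have step : forall i, pcost a b (S (tf i).+1) i <=
    \sum_(e in O i) (a e * (N e + 1)%:R + b e).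
  move=> i; have [hti hpi _] := Htf i.
  have [s [Hbr E1]] := Hst _ hti.
  rewrite hpi in Hbr E1; rewrite E1.
  apply: le_trans (br_bound ha Hbr (HO i)) _.
  apply: ler_sum => e _; rewrite lerD2r ler_wpM2l // ler_nat leq_add2r.
  by apply: hN; have [h _ _] := Htf i.
apply: (@le_trans _ _ (2 * \sum_(i < n) pcost a b (S (tf i).+1) i)); last first.
  by rewrite ler_wpM2l //; apply: ler_sum => i _; exact: step.
have -> : \sum_(i < n) pcost a b (S (tf i).+1) i =
   \sum_(i < n) \sum_(e in f i) (a e * (load (S (tf i).+1) e)%:R + b e).
  by apply: eq_bigr => i _; rewrite /pcost fin.
rewrite /scost /pcost.
rewrite (swap_sum f (fun i e => a e * (load f e)%:R + b e)).
rewrite (swap_sum f (fun i e => a e * (load (S (tf i).+1) e)%:R + b e)).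
rewrite mulr_sumr; apply: ler_sum => e _.
rewrite !big_split /= mulrDr; apply: lerD; last first.
  have : 0 <= \sum_(i < n | e \in f i) b e by apply: sumr_ge0.
  lra.
rewrite -!mulr_sumr -!natr_sum mulrCA ler_wpM2l //.
rewrite -natrM ler_nat.
have eqm : load f e = (\sum_(l < n) (e \in f l))%N by apply: load_sum.
rewrite eqm.
apply: (leq_trans (pair_count _ tf)); rewrite leq_mul2l /=.
apply: leq_sum => i _; rewrite load_sum; apply: leq_sum => l _.
case: (leqP (tf l) (tf i)) => h //=.
rewrite (mid l (tf i).+1) ?fin //.
have [/andP [? ?] _ _] := Htf i; apply/andP; split; lia.
Qed.

Lemma seg_Y (R : realFieldType) n (E : finType) (a b : E -> R)
  (Sigma : 'I_n -> {set {set E}}) (beta : R) (S : nat -> profile n E)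
  (p : nat -> 'I_n) (t0 T : nat) (O : profile n E) (N : E -> nat) :
  (forall e, 0 <= a e) -> (forall e, 0 <= b e) -> feasible Sigma O ->
  seg_ok a b Sigma beta S p t0 T ->
  (forall u e, (t0 <= u < t0 + T)%N -> (load (S u) e <= N e)%N) ->
  \sum_(t0 <= u < t0 + T) pcost a b (S u.+1) (p u) <= beta * Qt a b O N.
Proof.
move=> ha hb HO [Hst Hcov] hN.
apply: (@le_trans _ _ (\sum_(t0 <= u < t0 + T)
   (fun i => \sum_(e in O i) (a e * (N e + 1)%:R + b e)) (p u))).
  apply: ler_sum_nat => u hu /=.
  have [s [Hbr E1]] := Hst _ hu.
  rewrite E1; apply: le_trans (br_bound ha Hbr (HO _)) _.
  apply: ler_sum => e _; rewrite lerD2r ler_wpM2l // ler_nat leq_add2r.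
  exact: hN.
apply: sum_moves.
  move=> i; apply: sumr_ge0 => e _; apply: addr_ge0 => //.
  by apply: mulr_ge0.
by move=> i; case: (Hcov i).
Qed.

Lemma sq_aux (x y z w : nat) (c : bool) :
  (x <= y + c -> y ^ 2 <= z + 2 * w -> x ^ 2 <= z + 2 * (w + c * x))%N.
Proof.
move=> h1 h2.
have h3 : (x ^ 2 <= y ^ 2 + 2 * (c * x))%N.
  case: (leqP x y) => h.
    have : (x * x <= y * y)%N by apply: leq_mul.
    rewrite -!mulnn; lia.
  have hx : x = y.+1 by move: h1; case: c => /=; lia.
  move: h1; case: c => /=; last lia.
  rewrite hx; move=> _; rewrite -!mulnn mul1n; nia.
lia.
Qed.

Definition Nmax n (E : finType) (S : nat -> profile n E) (t0 T : nat) (e : E)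
  : nat := (\max_(k < T) load (S (t0 + k)%N) e)%N.

Lemma seg_W (R : realFieldType) n (E : finType) (a b : E -> R)
  (Sigma : 'I_n -> {set {set E}}) (beta : R) (S : nat -> profile n E)
  (p : nat -> 'I_n) (t0 T : nat) :
  (forall e, 0 <= a e) -> (forall e, 0 <= b e) ->
  seg_ok a b Sigma beta S p t0 T ->
  \sum_e a e * ((Nmax S t0 T e) ^ 2)%N%:R <=
  scost a b (S t0) + 2 * \sum_(t0 <= u < t0 + T) pcost a b (S u.+1) (p u).
Proof.
move=> ha hb [Hst Hcov].
pose B e := (load (S t0) e ^ 2 + 2 * \sum_(t0 <= u < t0 + T)
              (e \in S u.+1 (p u)) * load (S u.+1) e)%N.
have sq : forall e d, (d <= T)%N -> (load (S (t0 + d)%N) e ^ 2 <=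
    load (S t0) e ^ 2 + 2 * \sum_(t0 <= u < t0 + d)
              (e \in S u.+1 (p u)) * load (S u.+1) e)%N.
  move=> e; elim => [|d IH] hd; first by rewrite addn0 big_geq //; lia.
  rewrite addnS big_nat_recr /=; last lia.
  have [s [_ E1]] := Hst (t0 + d)%N ltac:(apply/andP; split; lia).
  rewrite E1 upd_same.
  have h1 := load_upd (S (t0 + d)%N) (p (t0 + d)%N) s e.
  have h2 := IH ltac:(lia).
  exact: (sq_aux h1 h2).
have sqN : forall e, (Nmax S t0 T e ^ 2 <= B e)%N.
  move=> e; rewrite /Nmax; elim/big_ind: _.
  - by [].
  - by move=> x y hx hy; rewrite /maxn; case: ifP.
  - move=> k _; apply: leq_trans (sq e k (ltnW (ltn_ord k))) _.
    rewrite /B leq_add2l leq_mul2l /=.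
    rewrite (@big_cat_nat _ _ _ (t0 + k)%N t0 (t0 + T)%N) /=.
    - exact: leq_addr.
    - exact: leq_addr.
    - by rewrite leq_add2l ltnW.
apply: (@le_trans _ _ (\sum_e a e * (B e)%:R)).
  by apply: ler_sum => e _; rewrite ler_wpM2l // ler_nat.
rewrite /B; under eq_bigr => e _ do rewrite natrD mulrDr.
rewrite big_split /=; apply: lerD.
  rewrite scost_load; apply: ler_sum => e _.
  rewrite natrX.
  have h0 : 0 <= (load (S t0) e)%:R :> R by [].
  have := ha e; have := hb e; nra.
under eq_bigr => e _ do rewrite natrM natr_sum mulr_sumr.
under eq_bigr => e _ do rewrite mulr_sumr.
rewrite exchange_big /= mulr_sumr; apply: ler_sum => u _.
rewrite /pcost mulr_sumr [X in _ <= X]big_mkcond /=; apply: ler_sum => e _.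
case: (e \in S u.+1 (p u)) => /=.
  rewrite mul1n; have := ha e; have := hb e.
  have : 0 <= (load (S u.+1) e)%:R :> R by [].
  nra.
by rewrite mul0n mulr0 mulr0.
Qed.


Lemma alg (R : realFieldType) (W C0 Y Q P Z beta nu : R) : 0 <= Q -> 0 <= beta -> 0 < nu ->
 W <= C0 + 2 * Y -> Y <= beta * Q -> Q <= P + Z -> 2 * nu * P <= W + Z * nu ^+ 2 -> 2 * beta <= nu ->
 nu * Q <= C0 + Z * nu ^+ 2 + 2 * nu * Z.
Proof. move=> *. nra. Qed.

Lemma nat_sq_ge (R : realFieldType) (x : nat) : (x%:R : R) <= x%:R * x%:R.
Proof. by rewrite -natrM ler_nat; case: x => // x; rewrite leq_pmulr. Qed.

Lemma eq_le_ge0 (R : realFieldType) (x y : R) : x <= y -> 0 <= y - x.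
Proof. by rewrite subr_ge0. Qed.

Lemma seg_main (R : realFieldType) n (E : finType) (a b : E -> R)
  (Sigma : 'I_n -> {set {set E}}) (beta : R) (S : nat -> profile n E)
  (p : nat -> 'I_n) (t0 T : nat) (O : profile n E) (nu : R) :
  (forall e, 0 <= a e) -> (forall e, 0 <= b e) -> feasible Sigma O ->
  seg_ok a b Sigma beta S p t0 T -> 0 <= beta -> 0 < nu -> 2 * beta <= nu ->
  nu * scost a b (S (t0 + T)%N) <=
  2 * scost a b (S t0) + 2 * scost a b O * nu ^+ 2 + 4 * nu * scost a b O.
Proof.
move=> ha hb HO Hseg hbeta hnu hnub.
pose N := Nmax S t0 T.
have hN : forall u e, (t0 <= u < t0 + T)%N -> (load (S u) e <= N e)%N.
  move=> u e /andP [h1 h2].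
  have hk : (u - t0 < T)%N by lia.
  have := @leq_bigmax _ (fun k : 'I_T => load (S (t0 + k)%N) e) (Ordinal hk).
  by rewrite /= subnKC.
have hF := seg_final ha hb HO Hseg hN.
have hY := seg_Y ha hb HO Hseg hN.
have hW := seg_W ha hb Hseg.
pose P := \sum_e (load O e)%:R * a e * (N e)%:R.
have hQ0 : 0 <= Qt a b O N.
  apply: sumr_ge0 => i _; apply: sumr_ge0 => e _; apply: addr_ge0 => //.
  exact: mulr_ge0.
have hQP : Qt a b O N <= P + scost a b O.
  rewrite /Qt sum_players scost_load -big_split /=; apply: ler_sum => e _.
  have hx := nat_sq_ge R (load O e).
  have hx0 : 0 <= (load O e)%:R :> R by [].
  have hN0 : 0 <= (N e)%:R :> R by [].
  have := mulr_ge0 (ha e) (eq_le_ge0 hx).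
  rewrite natrD; have := ha e; have := hb e.
nra.
have hP : 2 * nu * P <= \sum_e a e * ((N e) ^ 2)%N%:R + scost a b O * nu ^+ 2.
  apply: (@le_trans _ _ (\sum_e (a e * ((N e) ^ 2)%N%:R +
                                a e * ((load O e)%:R ^+ 2) * nu ^+ 2))).
    rewrite /P mulr_sumr; apply: ler_sum => e _.
    rewrite natrX; have := ha e.
    have : 0 <= a e * ((N e)%:R - nu * (load O e)%:R) ^+ 2.
      by apply: mulr_ge0 => //; apply: sqr_ge0.
    nra.
  rewrite big_split /= lerD2l -mulr_suml ler_wpM2r ?sqr_ge0 //.
  rewrite scost_load; apply: ler_sum => e _.
  have hx0 : 0 <= (load O e)%:R :> R by [].
  have := ha e; have := hb e; nra.
have := alg hQ0 hbeta hnu hW hY hQP hP hnub.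
nra.
Qed.

Lemma seg_first (R : realFieldType) n (E : finType) (a b : E -> R)
  (Sigma : 'I_n -> {set {set E}}) (beta : R) (S : nat -> profile n E)
  (p : nat -> 'I_n) (t0 T : nat) (O : profile n E) :
  (forall e, 0 <= a e) -> (forall e, 0 <= b e) -> feasible Sigma O ->
  seg_ok a b Sigma beta S p t0 T ->
  scost a b (S (t0 + T)%N) <= 2 * (n + 1)%:R * scost a b O.
Proof.
move=> ha hb HO Hseg.
have hN : forall u e, (t0 <= u < t0 + T)%N -> (load (S u) e <= (fun _ => n) e)%N.
  by move=> u e _; exact: load_le_n.
apply: le_trans (seg_final ha hb HO Hseg hN) _.
rewrite -mulrA ler_wpM2l //.
rewrite /Qt sum_players scost_load mulr_sumr; apply: ler_sum => e _.
have hx := nat_sq_ge R (load O e).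
have hx0 : 0 <= (load O e)%:R :> R by [].
have hn0 : 0 <= n%:R :> R by [].
have := mulr_ge0 (mulr_ge0 (ha e) (ler0n R n.+1)) (eq_le_ge0 hx).
have := mulr_ge0 hn0 (mulr_ge0 hx0 (hb e)).
rewrite natrD -addn1 natrD; have := ha e; have := hb e; nra.
Qed.


Lemma iter_real (R : realFieldType) (beta Z x C Cf : R) :
  1 <= beta -> 0 <= Z -> 1 <= x -> C <= 8 * (x * x) * beta * Z ->
  (2 * beta * x) * Cf <= 2 * C + 2 * Z * (2 * beta * x) ^+ 2 + 4 * (2 * beta * x) * Z ->
  Cf <= 16 * beta * x * Z.
Proof.
move=> hb hZ hx hC hCf.
have hnu : 0 < 2 * beta * x by nra.
suff : (2 * beta * x) * Cf <= (2 * beta * x) * (16 * beta * x * Z).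
  by rewrite ler_pM2l.
apply: le_trans hCf _.
have h1 : 0 <= (beta - 1) * (x * x * beta * Z).
  apply: mulr_ge0; first lra.
  apply: mulr_ge0 => //; apply: mulr_ge0; nra.
have h2 : 0 <= (beta * x - 1) * (beta * x * Z).
  apply: mulr_ge0; first nra.
  apply: mulr_ge0 => //; nra.
nra.
Qed.

Theorem theorem1 :
  exists c : nat, (0 < c)%N /\
  forall (R : realFieldType) (n : nat) (E : finType) (a b : E -> R)
    (Sigma : 'I_n -> {set {set E}}) (beta : R) (T : nat)
    (S : nat -> profile n E) (p : nat -> 'I_n),
    (2 < n)%N ->
    (forall e, 0 <= a e) -> (forall e, 0 <= b e) ->
    (forall S' : profile n E, feasible Sigma S' -> 0 < scost a b S') ->
    1 <= beta -> (n <= T)%N ->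
    feasible Sigma (S 0%N) ->
    (forall t, (t < loglog n * T)%N ->
       exists s, best_response a b Sigma (S t) (p t) s /\
                 S t.+1 = upd (S t) (p t) s) ->
    (forall j, (j < loglog n)%N -> bounded_covering p beta T j) ->
    forall S' : profile n E, feasible Sigma S' ->
      scost a b (S (loglog n * T)%N) <= c%:R * beta * scost a b S'.
Proof.
exists 2048%N; split => //.
move=> R n E a b Sigma beta T S p hn ha hb hpos hbeta hnT _ Hdyn Hcov O HO.
set L := loglog n.
set ul := up_log 2 n.
have hZ := hpos O HO.
set Z := scost a b O in hZ *.
have segs : forall j, (j < L)%N -> seg_ok a b Sigma beta S p (j * T) T.
  move=> j hj; split.
    move=> t /andP [h1 h2]; apply: Hdyn.
    have : (j.+1 * T <= L * T)%N by rewrite leq_mul2r hj orbT.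
    rewrite mulSn; lia.
  by move=> i; case: (Hcov j hj i).
have hnul : (n <= 2 ^ ul)%N by apply: up_logP.
have hul1 : (1 < ul)%N.
  case: ul hnul => [|[|u]] //=; lia.
have hLul : (ul <= 2 ^ L)%N by apply: up_logP.
have hL : (0 < L)%N.
  rewrite lt0n; apply/eqP => h0; move: hLul; rewrite h0 expn0; lia.
have EST : forall k, (k.+1 * T = k * T + T)%N by move=> k; rewrite mulSn addnC.
have inv : forall k, (k < L)%N -> exists jj, (jj <= ul %/ 2 ^ k + 2)%N /\
    scost a b (S (k.+1 * T)%N) <= (8 * 4 ^ jj)%N%:R * beta * Z.
  elim => [|k IH] hk.
    exists ul; split; first by rewrite expn0 divn1 leq_addr.
    rewrite EST; apply: le_trans (seg_first ha hb HO (segs 0%N hk)) _.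
    rewrite -/Z; apply: ler_wpM2r; first exact: ltW hZ.
    have h4 : (2 * (n + 1) <= 8 * 4 ^ ul)%N.
      have : (2 ^ ul <= 4 ^ ul)%N by rewrite -[4%N]/(2 * 2)%N expnMn leq_pmulr ?expn_gt0.
      lia.
    apply: (@le_trans _ _ ((8 * 4 ^ ul)%N%:R)).
      by rewrite -[2]/(2%:R) -natrM ler_nat.
    rewrite -[X in X <= _]mulr1 ler_wpM2l //.
  have [jj [hjj hC]] := IH (ltnW hk).
  exists (jj %/ 2 + 1)%N; split.
    rewrite expnS mulnC divnMA.
    move: hjj; set m := (ul %/ 2 ^ k)%N; lia.
  have hseg := segs k.+1 hk.
  have hb0 : 0 <= beta by lra.
  set x : R := (2 ^ jj)%N%:R.
  have hx : 1 <= x by rewrite /x ler1n expn_gt0.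
  have hnu : 0 < 2 * beta * x by nra.
  have hnub : 2 * beta <= 2 * beta * x by nra.
  have hm := seg_main ha hb HO hseg hb0 hnu hnub.
  rewrite -EST in hm.
  have hC' : scost a b (S (k.+1 * T)%N) <= 8 * (x * x) * beta * Z.
    by move: hC; rewrite /x -natrM -expnMn natrM.
  have := iter_real hbeta (ltW hZ) hx hC' hm.
  move=> h; apply: le_trans h _.
  have hnat : 16 * x <= (8 * 4 ^ (jj %/ 2 + 1))%N%:R.
    have -> : 16 * x = (16 * 2 ^ jj)%N%:R by rewrite natrM.
    rewrite ler_nat.
    have : (2 ^ jj.+1 <= 4 ^ (jj %/ 2 + 1))%N.
      rewrite -[4%N]/(2 ^ 2)%N -expnM leq_exp2l //.
      lia.
    rewrite expnS; lia.
  have := ler_wpM2r (mulr_ge0 hb0 (ltW hZ)) hnat.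
  move=> h2; apply: le_trans _ (le_trans h2 _).
    by rewrite le_eqVlt; apply/orP; left; apply/eqP; ring.
  by rewrite le_eqVlt; apply/orP; left; apply/eqP; ring.
have [jj [hjj hC]] := inv L.-1 ltac:(lia).
rewrite prednK // in hC.
apply: le_trans hC _.
apply: ler_wpM2r; first exact: ltW hZ.
apply: ler_wpM2r; first lra.
rewrite ler_nat.
have hd : (ul %/ 2 ^ L.-1 <= 2)%N.
  have : (ul <= 2 * 2 ^ L.-1)%N by rewrite -expnS prednK.
  move/(leq_div2r (2 ^ L.-1)); rewrite mulnK ?expn_gt0 //.
have : (4 ^ jj <= 4 ^ 4)%N by rewrite leq_exp2l //; lia.
lia.
Qed.
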